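(* A linear dendron $T$ is reducible if and only if $T$ is a star $S_n$ whose number of states $n$ is a composite number.
   Context: A finite dynamical system (FDS) is a function $A:S_A\to S_A$ on a finite set, considered up to isomorphism of functional graphs (arcs $x\to A(x)$). The product $AB$ acts on $S_A\times S_B$ by $(a,b)\mapsto(A(a),B(b))$. An FDS $T$ is reducible if $T=AB$ for FDSs $A,B$ each having strictly fewer states than $T$. A dendron is an FDS with connected functional graph and a fixpoint. A predecessor of a state $s$ is a state $t$ with $A(t)=s$. A linear dendron is a dendron in which every state other than the fixpoint has at most one predecessor. The depth of a dendron is the maximum, over states $s$, of the least $m\ge 0$ such that the $m$-fold iterate of the map sends $s$ to the fixpoint. A star $S_n$ is a linear dendron of depth at most $1$ with $n$ states (a fixpoint together with $n-1$ states mapped directly to it). *)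

(* Defs.v *)
From mathcomp Require Import all_boot.
Set Implicit Arguments. Unset Strict Implicit. Unset Printing Implicit Defensive.

(* An FDS is represented by a map f : S -> S on a finite type S. *)

Definition fds_iso (S S' : finType) (f : S -> S) (g : S' -> S') : Prop :=
  exists h : S -> S', bijective h /\ forall x, h (f x) = g (h x).

Definition fds_prod (A B : finType) (fA : A -> A) (fB : B -> B) : A * B -> A * B :=
  fun p => (fA p.1, fB p.2).

Definition reducible (T : finType) (f : T -> T) : Prop :=
  exists (A B : finType) (fA : A -> A) (fB : B -> B),
    #|A| < #|T| /\ #|B| < #|T| /\ fds_iso f (fds_prod fA fB).

(* Underlying undirected graph of the functional graph (arcs x -> f x). *)
Definition fds_adj (T : finType) (f : T -> T) : rel T :=
  fun x y => (f x == y) || (f y == x).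

Definition fds_connected (T : finType) (f : T -> T) : Prop :=
  forall x y : T, connect (fds_adj f) x y.

Definition has_fixpoint (T : finType) (f : T -> T) : Prop :=
  exists x, f x = x.

Definition dendron (T : finType) (f : T -> T) : Prop :=
  fds_connected f /\ has_fixpoint f.

Definition preds (T : finType) (f : T -> T) (s : T) : {set T} :=
  [set t | f t == s].

Definition linear_dendron (T : finType) (f : T -> T) : Prop :=
  dendron f /\ forall s, f s != s -> #|preds f s| <= 1.

Definition depth_le (T : finType) (f : T -> T) (k : nat) : Prop :=
  exists r, f r = r /\ forall s, exists m, m <= k /\ iter m f s = r.

Definition is_star (T : finType) (f : T -> T) (n : nat) : Prop :=
  linear_dendron f /\ depth_le f 1 /\ #|T| = n.

Definition composite (n : nat) : bool := (1 < n) && ~~ prime n.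

(* Main.v *)
Require Import Defs.
From mathcomp Require Import all_boot.
From mathcomp Require Import zify.
From Stdlib Require Import Classical_Prop.

Lemma reach_fix (T : finType) (f : T -> T) r :
  fds_connected f -> f r = r -> forall s, exists m, iter m f s = r.
Proof.
move=> Hc Hr s.
have /connectP [p Hp ->] := Hc r s.
have gen : forall p x, path (fds_adj f) x p -> (exists m, iter m f x = r) ->
   exists m, iter m f (last x p) = r.
  elim=> [|y q IH] x /=; first by [].
  move=> /andP [Hxy Hq] [m Hm]; apply: (IH y Hq).
  case/orP: Hxy => /eqP Hxy.
  - case: m Hm => [|m] /= Hm.
    + by exists 0; rewrite /= -Hxy Hm Hr.
    + by exists m; rewrite -Hxy -iterSr.
  - by exists m.+1; rewrite iterSr Hxy.
by apply: gen Hp _; exists 0.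
Qed.

Lemma pre_fix (A : Type) (fA : A -> A) a0 :
  forall m x, x <> a0 -> iter m fA x = a0 -> exists x', x' <> a0 /\ fA x' = a0.
Proof.
elim=> [|m IH] x Hx; first by move=> H; case: Hx.
rewrite iterSr.
case: (classic (fA x = a0)) => [E _|N]; first by exists x.
exact: IH.
Qed.

Lemma core (A B : Type) (fA : A -> A) (gB : B -> B) a0 b0 :
  fA a0 = a0 -> (forall x, exists m, iter m fA x = a0) ->
  gB b0 = b0 -> (forall y, exists m, iter m gB y = b0) ->
  (exists x, x <> a0) ->
  (forall x1 y1 x2 y2, fA x1 = fA x2 -> gB y1 = gB y2 ->
     ~ (fA (fA x1) = fA x1 /\ gB (gB y1) = gB y1) -> x1 = x2 /\ y1 = y2) ->
  forall y, gB y = b0.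
Proof.
move=> Ha Hra Hb Hrb [x1 Hx1] Q y.
apply: NNPP => Ny.
have [x [Hx Hfx]] : exists x', x' <> a0 /\ fA x' = a0.
  by have [m Hm] := Hra x1; exact: pre_fix Hm.
have Hfix : gB (gB y) <> gB y.
  move=> E; have [m Hm] := Hrb (gB y).
  by apply: Ny; rewrite -Hm iter_fix.
have [] := Q a0 y x y (etrans Ha (esym Hfx)) erefl.
  by case=> _ ?; apply: Hfix.
by move=> E _; apply: Hx.
Qed.

Theorem mainTheorem7 (T : finType) (f : T -> T) :
  linear_dendron f ->
  (reducible f <-> exists n : nat, is_star f n /\ composite n).
Proof.
move=> Hld; have [[Hc [r Hr]] Hlin] := Hld; split.
- case=> [A [B [fA [fB [HA [HB [h [hbij hF]]]]]]]].
  have [hi hK hiK] := hbij.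
  have fhi : forall p, f (hi p) = hi (fds_prod fA fB p).
    by move=> p; apply: (can_inj hK); rewrite hF !hiK.
  have iterh : forall m s, h (iter m f s) = (iter m fA (h s).1, iter m fB (h s).2).
    elim=> [|m IH] s /=; first by case: (h s).
    by rewrite hF IH.
  have Hreach := @reach_fix T f r Hc Hr.
  pose a0 := (h r).1; pose b0 := (h r).2.
  have Hhr : h r = (a0, b0) by rewrite /a0 /b0; case: (h r).
  have [Ha Hb] : fA a0 = a0 /\ fB b0 = b0.
    by have := hF r; rewrite Hr Hhr /fds_prod /= => -[<- <-].
  have Hra : forall x, exists m, iter m fA x = a0.
    move=> x; have [m Hm] := Hreach (hi (x, b0)); exists m.
    by have := iterh m (hi (x, b0)); rewrite Hm hiK Hhr /= => -[->].
  have Hrb : forall y, exists m, iter m fB y = b0.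
    move=> y; have [m Hm] := Hreach (hi (a0, y)); exists m.
    by have := iterh m (hi (a0, y)); rewrite Hm hiK Hhr /= => -[_ ->].
  have Hcard : #|T| = #|A| * #|B| by rewrite (bij_eq_card hbij) card_prod.
  have A0 : 0 < #|A| by apply/card_gt0P; exists a0.
  have B0 : 0 < #|B| by apply/card_gt0P; exists b0.
  have A1 : 1 < #|A| by nia.
  have B1 : 1 < #|B| by nia.
  have exA : exists x, x <> a0.
    move: A1; rewrite (cardD1 a0) inE /= ltnS => /card_gt0P [x].
    by rewrite !inE => /andP [/eqP ? _]; exists x.
  have exB : exists y, y <> b0.
    move: B1; rewrite (cardD1 b0) inE /= ltnS => /card_gt0P [y].
    by rewrite !inE => /andP [/eqP ? _]; exists y.
  have Q : forall x1 y1 x2 y2, fA x1 = fA x2 -> fB y1 = fB y2 ->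
     ~ (fA (fA x1) = fA x1 /\ fB (fB y1) = fB y1) -> x1 = x2 /\ y1 = y2.
    move=> x1 y1 x2 y2 E1 E2 NF.
    have Hs : f (hi (x1, y1)) = f (hi (x2, y2)) by rewrite !fhi /fds_prod /= E1 E2.
    have Np : f (f (hi (x1, y1))) != f (hi (x1, y1)).
      apply/eqP => E; apply: NF.
      by have := congr1 h E; rewrite !fhi !hiK /fds_prod /= => -[-> ->].
    have Hle := Hlin _ Np.
    have := card_le1_eqP Hle (hi (x1, y1)) (hi (x2, y2)).
    rewrite !inE eqxx -Hs eqxx => /(_ isT isT) /(congr1 h).
    by rewrite !hiK => -[-> ->].
  have HB' := @core A B fA fB a0 b0 Ha Hra Hb Hrb exA Q.
  have HA' : forall x, fA x = a0.
    apply: (@core B A fB fA b0 a0 Hb Hrb Ha Hra exB) => y1 x1 y2 x2 E1 E2 N.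
    have [] := Q x1 y1 x2 y2 E2 E1; last by move=> -> ->.
    by case=> ??; apply: N.
  exists #|T|; split; last first.
    rewrite /composite Hcard; apply/andP; split; first by nia.
    apply/negP => /primeP [_ Hd].
    by have := Hd #|A| (dvdn_mulr _ (dvdnn _)); case/orP => /eqP; nia.
  split=> //; split=> //.
  exists r; split=> // s; exists 1; split=> //=.
  by apply: (can_inj hK); rewrite hF Hhr /fds_prod HA' HB'.
- case=> n [[_ [[r0 [Hr0 Hd]] Hn]] /andP [Hn1 Hnp]].
  have Hf : forall s, f s = r0.
    move=> s; have [m [Hm Hi]] := Hd s.
    by case: m Hm Hi => [|[|m]] //= _ ->.
  have := primePn Hnp; case=> [|[d /andP [d1 dn] dd]]; first by nia.
  have E : #|T| = #|{: 'I_d * 'I_(n %/ d)}|.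
    by rewrite card_prod !card_ord Hn mulnC divnK.
  pose h0 (x : T) : 'I_d * 'I_(n %/ d) := enum_val (cast_ord E (enum_rank x)).
  exists 'I_d, 'I_(n %/ d), (fun _ => (h0 r0).1), (fun _ => (h0 r0).2).
  split; first by rewrite card_ord Hn.
  split; first by rewrite card_ord Hn ltn_Pdiv //; nia.
  exists h0; split.
    rewrite /h0; apply: bij_comp; first exact: enum_val_bij.
    apply: bij_comp; last exact: enum_rank_bij.
    by exists (cast_ord (esym E)) => i; apply: val_inj.
  by move=> x; rewrite Hf /fds_prod; case: (h0 r0).
Qed.
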